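(* Let $m\ge 1$, let $t_0$ be a vertex of $P(G,g_0)$, and let $t_1,\dots,t_m$ and $\mu$-operations $\nu_1,\dots,\nu_m$ be such that for each $i=1,\dots,m$ the operation $\nu_i$ is applicable to $t_{i-1}$ and $t_i=\nu_i(t_{i-1})$, and for each $i=1,\dots,m-1$ the leading element of $\nu_{i+1}$ equals the new element of $\nu_i$. Then $t_0,t_1,\dots,t_m$ are pairwise distinct vertices of $P(G,g_0)$ and any two of them are adjacent, i.e. they induce a complete subgraph of the graph of $P(G,g_0)$.
   Context: Let $G$ be a finite abelian group of order $D$ with zero element $0$, and let $G^+=G\setminus\{0\}$. For $g_0\in G$, let $T(G,g_0)$ be the set of vectors $t=(t(g))_{g\in G^+}\in\mathbb{Z}_{\ge 0}^{G^+}$ with $\sum_{g\in G^+}t(g)g=g_0$ (sum computed in $G$), where the zero vector is excluded when $g_0=0$. The master corner polyhedron is $P(G,g_0)=\mathrm{conv}\,T(G,g_0)\subset\mathbb{R}^{G^+}$. For $t\in T(G,g_0)$ put $G_t=\{g\in G^+ : t(g)>0\}$. The graph of $P(G,g_0)$ has the vertices of $P(G,g_0)$ as nodes, two vertices being adjacent if the segment joining them is an edge (one-dimensional face) of $P(G,g_0)$. $\mu$-operations: For $t\in T(G,g_0)$ and distinct $h,f\in G_t$ with $t(h)\le t(f)$ and $h+f\neq 0$, the operation $\mu_{h,f}$ is said to be applicable to $t$, and $s=\mu_{h,f}(t)$ is defined by $s(h)=0$, $s(f)=t(f)-t(h)$, $s(h+f)=t(h+f)+t(h)$, and $s(g)=t(g)$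 for all other $g\in G^+$. For $t\in T(G,g_0)$ and $h\in G_t$ with $t(h)>1$ and $t(h)h\neq 0$, the operation $\mu_h$ is applicable to $t$, and $s=\mu_h(t)$ is defined by $s(h)=0$, $s(t(h)h)=t(t(h)h)+1$, and $s(g)=t(g)$ for all other $g\in G^+$. The leading element of $\mu_{h,f}$ and of $\mu_h$ is $h$; the new element of $\mu_{h,f}$ applied to $t$ is $h+f$, and the new element of $\mu_h$ applied to $t$ is $t(h)h$. *)

(* Defs.v *)
From HB Require Import structures.
From mathcomp Require Import all_boot all_order all_algebra.
Set Implicit Arguments. Unset Strict Implicit. Unset Printing Implicit Defensive.
Import Order.TTheory GRing.Theory Num.Theory.

(* Points of R^{G^+} are represented by functions on G; only coordinates
   g != 0 are ever used (dot products range over G^+, and the embedded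
   points of T have coordinate 0 at g = 0). *)

Section Defs.
Variable G : finZmodType.

(* T(G,g0): nonnegative integer vectors on G^+ (stored as ffun on G with
   value 0 at 0) with sum_{g in G^+} t(g) g = g0, zero vector excluded if g0 = 0 *)
Definition inT (g0 : G) (t : {ffun G -> nat}) : Prop :=
  t 0%R = 0%N /\
  (\sum_(g : G | g != 0%R) g *+ t g)%R = g0 /\
  (g0 = 0%R -> exists g : G, g != 0%R /\ (0 < t g)%N).

Variable R : realFieldType.
Local Open Scope ring_scope.

Definition embed (t : {ffun G -> nat}) : {ffun G -> R} := [ffun g => (t g)%:R].

Definition inP (g0 : G) (x : {ffun G -> R}) : Prop :=
  exists (n : nat) (ts : 'I_n -> {ffun G -> nat}) (lam : 'I_n -> R),
    (forall i, inT g0 (ts i)) /\ (forall i, 0 <= lam i) /\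
    \sum_(i < n) lam i = 1 /\
    forall g : G, x g = \sum_(i < n) lam i * (ts i g)%:R.

Definition dotp (c : G -> R) (x : {ffun G -> R}) : R :=
  \sum_(g : G | g != 0) c g * x g.

Definition is_vertex (g0 : G) (v : {ffun G -> R}) : Prop :=
  inP g0 v /\
  exists (c : G -> R) (d : R),
    (forall x, inP g0 x -> dotp c x <= d) /\
    (forall x, inP g0 x -> (dotp c x = d <-> x = v)).

Definition adjacent (g0 : G) (u v : {ffun G -> R}) : Prop :=
  is_vertex g0 u /\ is_vertex g0 v /\ u <> v /\
  exists (c : G -> R) (d : R),
    (forall x, inP g0 x -> dotp c x <= d) /\
    (forall x, inP g0 x -> (dotp c x = d <->
        exists l : R, 0 <= l <= 1 /\ x = [ffun g => (1 - l) * u g + l * v g])).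
End Defs.

Section Mu.
Variable G : finZmodType.
Local Open Scope ring_scope.

(* MuPair h f = mu_{h,f};  MuSingle h = mu_h *)
Inductive mu_op := MuPair of G & G | MuSingle of G.

Definition applicable (g0 : G) (t : {ffun G -> nat}) (o : mu_op) : Prop :=
  inT g0 t /\
  match o with
  | MuPair h f => [&& h != 0, f != 0, (0 < t h)%N, (0 < t f)%N,
                   h != f, (t h <= t f)%N & h + f != 0]
  | MuSingle h => [&& h != 0, (1 < t h)%N & h *+ t h != 0]
  end.

Definition mu_apply (o : mu_op) (t : {ffun G -> nat}) : {ffun G -> nat} :=
  match o with
  | MuPair h f =>
      [ffun g => if g == h then 0%N
                 else if g == f then (t f - t h)%N
                 else if g == h + f then (t (h + f)%R + t h)%N
                 else t g]
  | MuSingle h =>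
      let t' := [ffun g => if g == h then 0%N else t g] in
      [ffun g => if g == h *+ t h then (t' g).+1 else t' g]
  end.

Definition leading (o : mu_op) : G :=
  match o with MuPair h _ => h | MuSingle h => h end.

Definition new_elem (o : mu_op) (t : {ffun G -> nat}) : G :=
  match o with MuPair h f => h + f | MuSingle h => h *+ t h end.
End Mu.

(* Main.v *)
Require Import Defs.
From HB Require Import structures.
From mathcomp Require Import all_boot all_order all_algebra.
From mathcomp Require Import zify ring lra.
Import Order.TTheory GRing.Theory Num.Theory.
Set Implicit Arguments. Unset Strict Implicit. Unset Printing Implicit Defensive.

Section Faces.
Variable G : finZmodType.
Variable R : realFieldType.
Variable g0 : G.
Local Open Scope ring_scope.

Definition ccost (c : G -> R) (t : {ffun G -> nat}) : R :=
  \sum_(g : G | g != 0) c g * (t g)%:R.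

Lemma dotp_embed c t : dotp c (embed R t) = ccost c t.
Proof. by apply: eq_bigr => g _; rewrite ffunE. Qed.

Lemma inP_embed t : inT g0 t -> inP g0 (embed R t).
Proof.
move=> Ht; exists 1%N, (fun _ => t), (fun _ => 1); split=> //; split=> //.
split; first by rewrite big_ord1.
by move=> g; rewrite big_ord1 mul1r ffunE.
Qed.

Lemma dotp_comb n (ts : 'I_n -> {ffun G -> nat}) (lam : 'I_n -> R) (c : G -> R) (x : {ffun G -> R}) :
  (forall g, x g = \sum_(i < n) lam i * (ts i g)%:R) ->
  dotp c x = \sum_(i < n) lam i * ccost c (ts i).
Proof.
move=> Hx; rewrite /dotp.
under eq_bigr => g _ do rewrite Hx mulr_sumr.
rewrite exchange_big /=; apply: eq_bigr => i _.
rewrite /ccost mulr_sumr; apply: eq_bigr => g _; ring.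
Qed.

Lemma dotp_mix c u v l :
  dotp c [ffun g => (1 - l) * embed R u g + l * embed R v g] =
  (1 - l) * ccost c u + l * ccost c v.
Proof.
rewrite /dotp /ccost !mulr_sumr -big_split /=; apply: eq_bigr => g _.
rewrite !ffunE; ring.
Qed.

Lemma face_lemma (U : G -> R) D :
  (forall t, inT g0 t -> D <= ccost U t) ->
  forall n (ts : 'I_n -> {ffun G -> nat}) (lam : 'I_n -> R),
  (forall i, inT g0 (ts i)) -> (forall i, 0 <= lam i) -> \sum_(i < n) lam i = 1 ->
  D <= \sum_(i < n) lam i * ccost U (ts i) /\
  (\sum_(i < n) lam i * ccost U (ts i) = D ->
     forall i, lam i != 0 -> ccost U (ts i) = D).
Proof.
move=> Hval n ts lam Hts Hlam Hsum.
have E : \sum_(i < n) lam i * ccost U (ts i) - D =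
         \sum_(i < n) lam i * (ccost U (ts i) - D).
  rewrite -[X in _ - X]mul1r -Hsum mulr_suml -sumrB.
  by apply: eq_bigr => i _; ring.
have Hge : forall i : 'I_n, true -> 0 <= lam i * (ccost U (ts i) - D).
  by move=> i _; apply: mulr_ge0 => //; rewrite subr_ge0; apply: Hval.
split.
  by rewrite -subr_ge0 E; apply: sumr_ge0.
move=> Heq i Hi.
have := psumr_eq0P Hge; rewrite -E Heq subrr => /(_ erefl i erefl).
move/eqP; rewrite mulf_eq0 (negbTE Hi) /= subr_eq0 => /eqP //.
Qed.

Lemma vertex_of_cost (U : G -> R) D v :
  inT g0 v -> ccost U v = D ->
  (forall t, inT g0 t -> D <= ccost U t) ->
  (forall t, inT g0 t -> ccost U t = D -> t = v) ->
  is_vertex g0 (embed R v).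
Proof.
move=> Hv HvD Hval Huniq; split; first exact: inP_embed.
exists (fun g => - U g), (- D); split.
  move=> x [n [ts [lam [Hts [Hlam [Hsum Hx]]]]]].
  rewrite (dotp_comb _ Hx).
  have [H _] := face_lemma Hval Hts Hlam Hsum.
  have Hc : forall t, ccost (fun g => - U g) t = - ccost U t.
    by move=> t; rewrite /ccost -sumrN; apply: eq_bigr => g _; rewrite mulNr.
  under eq_bigr => i _ do rewrite Hc mulrN.
  by rewrite sumrN lerN2.
move=> x [n [ts [lam [Hts [Hlam [Hsum Hx]]]]]]; split.
  rewrite (dotp_comb _ Hx).
  have Hc : forall t, ccost (fun g => - U g) t = - ccost U t.
    by move=> t; rewrite /ccost -sumrN; apply: eq_bigr => g _; rewrite mulNr.
  under eq_bigr => i _ do rewrite Hc mulrN.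
  rewrite sumrN => /eqP; rewrite eqr_opp => /eqP Heq.
  have [_ H] := face_lemma Hval Hts Hlam Hsum.
  have {}H := H Heq.
  apply/ffunP => g; rewrite Hx ffunE.
  rewrite -[X in _ = X]mul1r -Hsum mulr_suml; apply: eq_bigr => i _.
  case: (eqVneq (lam i) 0) => [->|Hi]; first by rewrite !mul0r.
  by rewrite (Huniq _ (Hts i) (H i Hi)).
move=> ->; rewrite dotp_embed -HvD /ccost -sumrN.
by apply: eq_bigr => g _; rewrite mulNr.
Qed.

Lemma adjacent_of_cost (U : G -> R) D u v (L : {ffun G -> nat} -> R) :
  is_vertex g0 (embed R u) -> is_vertex g0 (embed R v) ->
  embed R u <> embed R v ->
  ccost U u = D -> ccost U v = D ->
  (forall t, inT g0 t -> D <= ccost U t) ->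
  (forall t, inT g0 t -> ccost U t = D ->
     0 <= L t <= 1 /\
     embed R t = [ffun g => (1 - L t) * embed R u g + L t * embed R v g]) ->
  adjacent g0 (embed R u) (embed R v).
Proof.
move=> Hu Hv Huv HuD HvD Hval Hseg; split=> //; split=> //; split=> //.
have Hc : forall t, ccost (fun g => - U g) t = - ccost U t.
  by move=> t; rewrite /ccost -sumrN; apply: eq_bigr => g _; rewrite mulNr.
exists (fun g => - U g), (- D); split.
  move=> x [n [ts [lam [Hts [Hlam [Hsum Hx]]]]]].
  rewrite (dotp_comb _ Hx).
  have [H _] := face_lemma Hval Hts Hlam Hsum.
  under eq_bigr => i _ do rewrite Hc mulrN.
  by rewrite sumrN lerN2.
move=> x [n [ts [lam [Hts [Hlam [Hsum Hx]]]]]]; split.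
  rewrite (dotp_comb _ Hx).
  under eq_bigr => i _ do rewrite Hc mulrN.
  rewrite sumrN => /eqP; rewrite eqr_opp => /eqP Heq.
  have [_ H] := face_lemma Hval Hts Hlam Hsum.
  have {}H := H Heq.
  exists (\sum_(i < n) lam i * L (ts i)); split.
    apply/andP; split.
      apply: sumr_ge0 => i _; case: (eqVneq (lam i) 0) => [->|Hi]; first by rewrite mul0r.
      have [/andP [H0 _] _] := Hseg _ (Hts i) (H i Hi).
      exact: mulr_ge0.
    rewrite -Hsum; apply: ler_sum => i _.
    case: (eqVneq (lam i) 0) => [->|Hi]; first by rewrite !mul0r.
    have [/andP [_ H1] _] := Hseg _ (Hts i) (H i Hi).
    by rewrite -[X in _ <= X]mulr1; apply: ler_wpM2l.
  apply/ffunP => g; rewrite Hx ffunE.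
  have E : forall i, lam i * (ts i g)%:R =
     lam i * ((1 - L (ts i)) * embed R u g + L (ts i) * embed R v g).
    move=> i; case: (eqVneq (lam i) 0) => [->|Hi]; first by rewrite !mul0r.
    have [_ /ffunP /(_ g)] := Hseg _ (Hts i) (H i Hi).
    by rewrite !ffunE => ->.
  under eq_bigr => i _ do rewrite E.
  have -> : 1 - \sum_(i < n) lam i * L (ts i) =
            \sum_(i < n) lam i * (1 - L (ts i)).
    rewrite -{1}Hsum -sumrB; apply: eq_bigr => i _; ring.
  rewrite !mulr_suml -big_split /=; apply: eq_bigr => i _; ring.
move=> [l [_ ->]]; rewrite dotp_mix !Hc HuD HvD; ring.
Qed.

End Faces.

Set Implicit Arguments. Unset Strict Implicit. Unset Printing Implicit Defensive.

Section Sums.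
Variable G : finZmodType.
Local Open Scope ring_scope.

Definition gsum (b : {ffun G -> nat}) : G := \sum_(g : G | g != 0) g *+ b g.

Lemma gsumD (a c : {ffun G -> nat}) :
  gsum [ffun g => (a g + c g)%N] = gsum a + gsum c.
Proof. by rewrite /gsum -big_split; apply: eq_bigr => g _; rewrite ffunE mulrnDr. Qed.

Lemma gsumB (a c : {ffun G -> nat}) : (forall g, c g <= a g)%N ->
  gsum [ffun g => (a g - c g)%N] = gsum a - gsum c.
Proof. by move=> H; rewrite /gsum -sumrB; apply: eq_bigr => g _; rewrite ffunE mulrnBr. Qed.

Lemma gsumM k (b : {ffun G -> nat}) :
  gsum [ffun g => (k * b g)%N] = gsum b *+ k.
Proof. by rewrite /gsum -sumrMnl; apply: eq_bigr => g _; rewrite ffunE mulnC mulrnA. Qed.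

Lemma gsum_e (n : G) k : n != 0 ->
  gsum [ffun g => if g == n then k else 0%N] = n *+ k.
Proof.
move=> Hn; rewrite /gsum (bigD1 n) //= ffunE eqxx big1 ?addr0 //.
by move=> g /andP [_ Hg]; rewrite ffunE (negbTE Hg).
Qed.

End Sums.

Set Implicit Arguments. Unset Strict Implicit. Unset Printing Implicit Defensive.

Section Opt.
Variable G : finZmodType.
Variable R : realFieldType.
Variable g0 : G.
Variable w : G -> R.
Variable D : R.
Variable t0 : {ffun G -> nat}.
Local Open Scope ring_scope.
Hypothesis Ht0 : inT g0 t0.
Hypothesis Hval : forall t, inT g0 t -> D <= ccost w t.
Hypothesis Huniq : forall t, inT g0 t -> ccost w t = D -> t = t0.
Hypothesis Hopt : ccost w t0 = D.

Lemma ccost_eq2 (c : G -> R) (a b e f : {ffun G -> nat}) :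
  (forall g, (a g + b g = e g + f g)%N) ->
  ccost c a + ccost c b = ccost c e + ccost c f.
Proof.
move=> H; rewrite /ccost -!big_split; apply: eq_bigr => g _.
by rewrite /= -!mulrDr -!natrD H.
Qed.

Lemma gsum_t0 : gsum t0 = g0.
Proof. by case: Ht0 => _ []. Qed.

Lemma swap (A B : {ffun G -> nat}) :
  (forall g, A g <= t0 g)%N -> (forall g, B g <= t0 g)%N ->
  A 0 = 0%N -> B 0 = 0%N -> gsum A = gsum B ->
  (exists g, 0 < A g)%N -> (exists g, 0 < B g)%N -> A = B.
Proof.
move=> HA HB A0 B0 HAB [ga Hga] [gb Hgb].
pose u := [ffun g => ([ffun g => t0 g - A g] g + B g)%N].
pose v := [ffun g => ([ffun g => t0 g - B g] g + A g)%N].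
have T0 : t0 0 = 0%N by case: Ht0.
have Hu : inT g0 u.
  split; first by rewrite !ffunE T0 A0 B0.
  split; first by rewrite -/(gsum u) gsumD gsumB // HAB subrK gsum_t0.
  move=> _; exists gb; split; last by rewrite !ffunE; lia.
  by apply/eqP => E; move: Hgb; rewrite E B0.
have Hv : inT g0 v.
  split; first by rewrite !ffunE T0 A0 B0.
  split; first by rewrite -/(gsum v) gsumD gsumB // HAB subrK gsum_t0.
  move=> _; exists ga; split; last by rewrite !ffunE; lia.
  by apply/eqP => E; move: Hga; rewrite E A0.
have E2 : ccost w u + ccost w v = ccost w t0 + ccost w t0.
  apply: ccost_eq2 => g; rewrite /u /v !ffunE; have := HA g; have := HB g; lia.
have Cu := Hval Hu; have Cv := Hval Hv.
rewrite Hopt in E2; have Eu : ccost w u = D by lra.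
have := Huniq Hu Eu => /ffunP Hug.
apply/ffunP => g; have := Hug g; rewrite /u !ffunE => H1; have H2 := HA g; have H3 := HB g.
move: H1 H2 H3; move: (A g) (B g) (t0 g) => x y z; lia.
Qed.


Definition xp (n : G) (b t : {ffun G -> nat}) : {ffun G -> nat} :=
  [ffun g => ((if g == n then 0 else t g) + t n * b g)%N].

Lemma xp_inT (n : G) (b t : {ffun G -> nat}) : n != 0 -> b 0 = 0%N -> gsum b = n -> (exists g, 0 < b g)%N ->
  inT g0 t -> inT g0 (xp n b t).
Proof.
move=> Hn b0 Hb [gb Hgb] [t0' [Ht Hne]].
have Hgb0 : gb != 0 by apply/eqP => E; move: Hgb; rewrite E b0.
split; first by rewrite ffunE eq_sym (negbTE Hn) t0' b0 muln0.
split.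
  have E1 : xp n b t = [ffun g => ([ffun g => if g == n then 0%N else t g] g
                                   + [ffun g => t n * b g] g)%N].
    by apply/ffunP => g; rewrite !ffunE.
  have E2 : t = [ffun g => ([ffun g => if g == n then 0%N else t g] g
                            + [ffun g => if g == n then t n else 0%N] g)%N].
    by apply/ffunP => g; rewrite !ffunE; case: eqP => [->|]; rewrite ?addn0.
  rewrite -/(gsum _) E1 gsumD gsumM Hb.
  move: Ht; rewrite -/(gsum t) {1}E2 gsumD gsum_e //.
move=> /Hne [g [Hg0 Hg]].
case: (eqVneq g n) => [Egn|Hgn].
  exists gb; split=> //; rewrite ffunE; move: Hg; rewrite Egn.
  move: (t n) (b gb) Hgb => x y; case: (_ == _) => /=; nia.
exists g; split=> //; rewrite ffunE (negbTE Hgn).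
move: Hg; move: (t g) (t n * b g)%N => x y; lia.
Qed.

Definition Uw (n h1 : G) (b : {ffun G -> nat}) (pen : bool) : G -> R :=
  fun g => if g == n then ccost w b else w g + (pen && (g == h1))%:R.

Definition Pen (n h1 : G) (pen : bool) (t : {ffun G -> nat}) : R :=
  \sum_(g | (g != 0) && (g != n)) (pen && (g == h1))%:R * (t g)%:R.

Lemma cost_Uw (n h1 : G) (b t : {ffun G -> nat}) pen : n != 0 ->
  ccost (Uw n h1 b pen) t = ccost w (xp n b t) + Pen n h1 pen t.
Proof.
move=> Hn.
have E1 : ccost w (xp n b t) =
   \sum_(g | g != 0) w g * (if g == n then 0%N else t g)%:R + (t n)%:R * ccost w b.
  rewrite /ccost mulr_sumr -big_split /=; apply: eq_bigr => g _.
  by rewrite ffunE natrD natrM; ring.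
rewrite E1 /ccost (bigD1 n) //= (bigD1 n (P := fun g => g != 0)) //= eqxx mulr0 add0r.
rewrite /Uw eqxx /Pen.
have -> : \sum_(i | (i != 0) && (i != n))
      (if i == n then \sum_(g | g != 0) w g * (b g)%:R else w i + (pen && (i == h1))%:R) * (t i)%:R
  = \sum_(i | (i != 0) && (i != n)) w i * (t i)%:R +
    \sum_(g | (g != 0) && (g != n)) (pen && (g == h1))%:R * (t g)%:R.
  rewrite -big_split /=; apply: eq_bigr => g /andP [_ Hg]; rewrite (negbTE Hg); ring.
have -> : \sum_(i | (i != 0) && (i != n)) w i * (if i == n then 0%N else t i)%:R =
          \sum_(i | (i != 0) && (i != n)) w i * (t i)%:R.
  by apply: eq_bigr => g /andP [_ Hg]; rewrite (negbTE Hg).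
rewrite /ccost; ring.
Qed.

Lemma Pen_ge0 (n h1 : G) pen (t : {ffun G -> nat}) : 0 <= Pen n h1 pen t.
Proof. by apply: sumr_ge0 => g _; apply: mulr_ge0; apply: ler0n. Qed.

Lemma Pen_eq0 (n h1 : G) (t : {ffun G -> nat}) : h1 != 0 -> h1 != n -> Pen n h1 true t = 0 -> t h1 = 0%N.
Proof.
move=> H0 Hn HP.
have Hge : forall g, (g != 0) && (g != n) ->
   0 <= (true && (g == h1))%:R * (t g)%:R :> R.
  by move=> *; apply: mulr_ge0; apply: ler0n.
have := @psumr_eq0P _ _ _ _ Hge HP h1; rewrite H0 Hn => /(_ erefl).
by rewrite eqxx mul1r => /eqP; rewrite pnatr_eq0 => /eqP.
Qed.

Lemma Pen_0 (n h1 : G) pen (t : {ffun G -> nat}) : (h1 != n -> t h1 = 0%N) -> Pen n h1 pen t = 0.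
Proof.
move=> H; apply: big1 => g /andP [_ Hg]; case: pen; rewrite ?mul0r //=.
case: eqP => [Eg|]; last by rewrite mul0r.
by rewrite Eg H ?mulr0 // -Eg.
Qed.

Lemma Pen_false (n h1 : G) (t : {ffun G -> nat}) : Pen n h1 false t = 0.
Proof. by apply: big1 => g _; rewrite /= mul0r. Qed.

End Opt.

Set Implicit Arguments. Unset Strict Implicit. Unset Printing Implicit Defensive.

Lemma eqF (G : finZmodType) (t u : {ffun G -> nat}) : t = u -> forall g, (t g = u g :> nat).
Proof. by move=> ->. Qed.

Lemma ffunPn (G : finZmodType) (t u : {ffun G -> nat}) :
  (forall g, (t g = u g :> nat)) -> t = u.
Proof. by move=> H; apply/ffunP. Qed.

Lemma app_lead (G : finZmodType) (g0 : G) t o : applicable g0 t o ->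
  inT g0 t /\ leading o != 0%R /\ (0 < t (leading o))%N.
Proof.
case: o => [h f|h] [Ht H] /=; split=> //.
  by case/and5P: H => H1 _ H3 _ _.
by case/and3P: H => H1 H2 _; split=> //; apply: ltn_trans H2.
Qed.

Lemma addr_neq_l (G : finZmodType) (n f : G) : n != 0%R -> (n + f != f)%R.
Proof. by move=> Hn; apply: contra Hn => /eqP E; rewrite -(addrK f n) E subrr. Qed.

Lemma addr_neq_r (G : finZmodType) (n f : G) : f != 0%R -> (n + f != n)%R.
Proof. by move=> Hf; apply: contra Hf => /eqP E; rewrite -(addKr n f) E addNr. Qed.

Section Chain.
Variable G : finZmodType.
Variable R : realFieldType.
Variable g0 : G.
Local Open Scope ring_scope.
Variable w : G -> R.
Variable D : R.
Variable ts : nat -> {ffun G -> nat}.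
Variable nu : nat -> mu_op G.
Variable m : nat.
Hypothesis Hval : forall t, inT g0 t -> D <= ccost w t.
Hypothesis Huniq : forall t, inT g0 t -> ccost w t = D -> t = ts 0%N.
Hypothesis Hopt : ccost w (ts 0%N) = D.
Hypothesis Hm : (1 <= m)%N.
Hypothesis Happ : forall i, (1 <= i <= m)%N ->
     applicable g0 (ts i.-1) (nu i) /\ ts i = mu_apply (nu i) (ts i.-1).
Hypothesis Hlead : forall i, (1 <= i < m)%N ->
     leading (nu i.+1) = new_elem (nu i) (ts i.-1).

Let h1 := leading (nu 1%N).

Lemma Ht0 : inT g0 (ts 0%N).
Proof. by have [/app_lead [] ] := Happ (i := 1%N) Hm. Qed.

Lemma h1_nz : h1 != 0 /\ (0 < ts 0%N h1)%N.
Proof. by have [/app_lead [_ ] ] := Happ (i := 1%N) Hm. Qed.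

Record Inv (j : nat) (n : G) (k : nat) (b : {ffun G -> nat}) : Prop := MkInv {
  iA : forall g, (ts j g + k * b g = ts 0%N g + (if g == n then k else 0))%N;
  iK : (0 < k)%N; iN : n != 0; iB0 : b 0 = 0%N; iS : gsum b = n;
  iC : (k * b h1 = ts 0%N h1)%N; iD : ts j n = k; iG : (0 < j)%N -> b n = 0%N }.

Section InvFacts.
Variables (j : nat) (n : G) (k : nat) (b : {ffun G -> nat}).
Hypothesis I : Inv j n k b.

Lemma inv_le g : (k * b g <= ts 0%N g)%N.
Proof.
have := iA I g; have := iA I n; rewrite eqxx (iD I).
case: eqP => [->|_]; lia.
Qed.

Lemma inv_bh1 : (0 < b h1)%N.
Proof. have := iC I; have := h1_nz; case=> _; lia. Qed.

Lemma inv_xp : xp n b (ts j) = ts 0%N.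
Proof.
apply: ffunPn => g; rewrite ffunE (iD I); have := iA I g.
case: eqP => [->|_]; rewrite ?(iD I).
all: lia.
Qed.

Lemma inv_h1 : h1 != n -> ts j h1 = 0%N.
Proof. move=> H; have := iA I h1; rewrite (negbTE H) (iC I); lia. Qed.

Lemma inv_inT : inT g0 (ts j).
Proof.
split.
  have := iA I 0; rewrite eq_sym (negbTE (iN I)) (iB0 I).
  by have [] := Ht0; lia.
split.
  have E : [ffun g => (ts j g + [ffun g => k * b g] g)%N] =
           [ffun g => (ts 0%N g + [ffun g => if g == n then k else 0] g)%N]%N.
    by apply/ffunP => g; rewrite !ffunE (iA I).
  have := congr1 (@gsum G) E; rewrite !gsumD gsumM gsum_e ?(iN I) // (iS I).
  by have [_ [<- _]] := Ht0; move/addIr.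
move=> _; exists n; split; first exact: iN I.
by rewrite (iD I) (iK I).
Qed.

End InvFacts.

Lemma e1_gsum (f : G) : f != 0 -> gsum [ffun g => if g == f then 1%N else 0%N] = f.
Proof. by move=> Hf; rewrite gsum_e // mulr1n. Qed.

Lemma chain j : (j <= m)%N -> exists n k b,
  Inv j n k b /\ ((j < m)%N -> leading (nu j.+1) = n).
Proof.
elim: j => [|j IH] Hj.
  have [Hh1 Hpos] := h1_nz.
  exists h1, (ts 0%N h1), [ffun g => if g == h1 then 1%N else 0%N]; split=> //.
  split=> //.
  - by move=> g; rewrite ffunE; case: eqP => [->|_]; lia.
  - by rewrite ffunE eq_sym (negbTE Hh1).
  - exact: e1_gsum.
  - by rewrite ffunE eqxx muln1.
have [n [k [b [I Hl]]]] := IH (ltnW Hj).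
have {Hl} Hl := Hl Hj.
have [Happ1 Hts1] := Happ (i := j.+1) Hj.
have Hlead1 : (j.+1 < m)%N -> leading (nu j.+2) = new_elem (nu j.+1) (ts j).
  by move=> H; apply: (Hlead (i := j.+1)).
simpl in Hts1.
have K := iK I; have Hnn := iN I; have HD := iD I.
move: Happ1 Hts1 Hlead1 Hl; case: (nu j.+1) => [h f|h] /=.
- move=> [_ /andP [_ /andP [Hf0 /andP [_ /andP [Hpf /andP [Hnf /andP [Hle Hnf0]]]]]]] Hts1 Hlead1 Hl.
  subst h; rewrite HD in Hle.
  have Hfn : f != n by rewrite eq_sym.
  have Hn'n : n + f != n := addr_neq_r n Hf0.
  have Hn'f : n + f != f := addr_neq_l f Hnn.
  pose b' := [ffun g => (b g + (if g == f then 1 else 0))%N].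
  have Hb'le : forall g, (b' g <= ts 0%N g)%N.
    move=> g; rewrite ffunE; case: (eqVneq g f) => [->|Hgf].
      have := iA I f; rewrite ?(negbTE Hfn); have := inv_le I f; nia.
    have := inv_le I g; nia.
  have Hb'0 : b' 0 = 0%N by rewrite ffunE (iB0 I) eq_sym (negbTE Hf0).
  have Hb'S : gsum b' = n + f.
    have -> : b' = [ffun g => (b g + [ffun g => if g == f then 1%N else 0%N] g)%N].
      by apply: ffunPn => g; rewrite !ffunE.
    by rewrite gsumD e1_gsum // (iS I).
  have Ht0n' : ts 0%N (n + f) = 0%N.
    apply/eqP; rewrite -leqn0 leqNgt; apply/negP => Hpos.
    have E : b' = [ffun g => if g == n + f then 1%N else 0%N].
    apply: (swap Ht0 Hval Huniq Hopt Hb'le _ Hb'0).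
    - by move=> g; rewrite ffunE; case: eqP => [->|] //.
    - by rewrite ffunE eq_sym (negbTE Hnf0).
    - by rewrite Hb'S e1_gsum.
    - by exists f; rewrite ffunE eqxx addn1.
    - by exists (n + f); rewrite ffunE eqxx.
    move: E => /eqF /(_ f); rewrite !ffunE eqxx eq_sym (negbTE Hn'f); lia.
  have Htsn' : ts j (n + f) = 0%N.
    have := iA I (n + f); rewrite (negbTE Hn'n) Ht0n'; lia.
  have Hbn' : b (n + f) = 0%N.
    have := iA I (n + f); rewrite (negbTE Hn'n) Ht0n'; nia.
  have Hh1f : h1 != f.
    case: (eqVneq h1 n) => [->|Hh1n] //.
    apply/eqP => E; have := inv_h1 I Hh1n; rewrite E; lia.
  exists (n + f), k, b'; split.
    split=> //.
    - move=> g; rewrite Hts1 !ffunE.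
      case: (eqVneq g n) => [->|Hgn].
        rewrite ?eqxx ?(negbTE Hnf) eq_sym ?(negbTE Hn'n).
        have := iA I n; rewrite ?eqxx HD; lia.
      rewrite ?(negbTE Hgn); case: (eqVneq g f) => [->|Hgf].
        rewrite ?eqxx eq_sym (negbTE Hn'f) HD.
        have := iA I f; rewrite ?(negbTE Hfn); nia.
      rewrite ?(negbTE Hgf); case: (eqVneq g (n + f)) => [->|Hgn'].
        rewrite ?eqxx ?(negbTE Hn'f) Htsn' Hbn' Ht0n' HD. lia.
      rewrite ?(negbTE Hgn'); have := iA I g; rewrite ?(negbTE Hgn); lia.
    - by rewrite ffunE (negbTE Hh1f) addn0 (iC I).
    - by rewrite Hts1 ffunE (negbTE Hn'n) (negbTE Hn'f) eqxx Htsn' HD.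
    - by move=> _; rewrite ffunE (negbTE Hn'f) Hbn'.
  by move=> Hj2; rewrite Hlead1.
- move=> [_ /andP [_ /andP [Hk Hn'0]]] Hts1 Hlead1 Hl.
  subst h; rewrite HD in Hk Hn'0 Hts1 Hlead1.
  pose b' := [ffun g => (k * b g)%N].
  have Hb'le : forall g, (b' g <= ts 0%N g)%N by move=> g; rewrite ffunE; apply: inv_le I g.
  have Hb'0 : b' 0 = 0%N by rewrite ffunE (iB0 I) muln0.
  have Hb'S : gsum b' = n *+ k by rewrite gsumM (iS I).
  have Hbh1 := inv_bh1 I.
  have Ht0n' : ts 0%N (n *+ k) = 0%N.
    apply/eqP; rewrite -leqn0 leqNgt; apply/negP => Hpos.
    have E : b' = [ffun g => if g == n *+ k then 1%N else 0%N].
    apply: (swap Ht0 Hval Huniq Hopt Hb'le _ Hb'0).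
    - by move=> g; rewrite ffunE; case: eqP => [->|] //.
    - by rewrite ffunE eq_sym (negbTE Hn'0).
    - by rewrite Hb'S e1_gsum.
    - by exists h1; rewrite ffunE; nia.
    - by exists (n *+ k); rewrite ffunE eqxx.
    move: E => /eqF /(_ h1); rewrite !ffunE; case: (_ == _); nia.
  exists (n *+ k), 1%N, b'; split.
    split=> //.
    - move=> g; rewrite Hts1 !ffunE mul1n.
      case: (eqVneq g n) => [->|Hgn].
        rewrite ?eqxx; have := iA I n; rewrite ?eqxx HD.
        by case: (_ == _); lia.
      rewrite ?(negbTE Hgn); have := iA I g; rewrite ?(negbTE Hgn).
      by case: (_ == _); lia.
    - by rewrite ffunE mul1n (iC I).
    - rewrite Hts1 !ffunE eqxx.
      case: (eqVneq (n *+ k) n) => [_|H] //.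
      rewrite ?(negbTE H); have := iA I (n *+ k); rewrite ?(negbTE H) Ht0n'; lia.
    - by move=> _; apply/eqP; rewrite -leqn0; move: (Hb'le (n *+ k)); rewrite Ht0n'.
  by move=> Hj2; rewrite Hlead1.
Qed.

Lemma core_vertex j : (j <= m)%N -> is_vertex g0 (embed R (ts j)).
Proof.
move=> Hj; have [n [k [b [I _]]]] := chain Hj.
have Hn := iN I; have Hbh1 := inv_bh1 I; have [Hh10 Hpos] := h1_nz.
have Hw : exists g, (0 < b g)%N by exists h1.
apply: (@vertex_of_cost _ _ _ (Uw w n h1 b true) D).
- exact: inv_inT I.
- rewrite cost_Uw // (inv_xp I) Hopt Pen_0 ?addr0 //; exact: inv_h1 I.
- move=> t Ht; rewrite cost_Uw //.
  have := Hval (xp_inT Hn (iB0 I) (iS I) Hw Ht).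
  have := Pen_ge0 R n h1 true t; lra.
move=> t Ht; rewrite cost_Uw // => HE.
have Ht' := xp_inT Hn (iB0 I) (iS I) Hw Ht.
have V := Hval Ht'; have P0 := Pen_ge0 R n h1 true t.
have Ex : ccost w (xp n b t) = D by lra.
have EP : Pen R n h1 true t = 0 by lra.
have X := Huniq Ht' Ex.
have Htn : t n = k.
  have := eqF X h1; rewrite ffunE -(iC I).
  case: (eqVneq h1 n) => [E|Hh1n].
    by move: Hbh1; move: (b h1) (t n) => x y; nia.
  rewrite (Pen_eq0 Hh10 Hh1n EP); move: Hbh1; move: (b h1) (t n) => x y; nia.
apply: ffunPn => g; have := eqF X g; rewrite ffunE Htn; have := iA I g.
case: (eqVneq g n) => [->|Hgn]; first by rewrite (iD I) Htn.
lia.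
Qed.

Lemma core_adj j : (0 < j <= m)%N ->
  adjacent g0 (embed R (ts 0%N)) (embed R (ts j)) /\ ts 0%N <> ts j.
Proof.
move=> /andP [Hj0 Hj]; have [n [k [b [I _]]]] := chain Hj.
have Hn := iN I; have Hbh1 := inv_bh1 I; have [Hh10 Hpos] := h1_nz.
have K := iK I.
have Hw : exists g, (0 < b g)%N by exists h1.
have bn0 : b n = 0%N by apply: (iG I).
have t0n : ts 0%N n = 0%N by have := iA I n; rewrite eqxx (iD I) bn0; lia.
have Hh1n : h1 != n by apply/eqP => E; move: Hpos; rewrite E t0n.
have Hneq : ts 0%N <> ts j.
  by move=> /eqF /(_ n); rewrite t0n (iD I); lia.
split=> //.
have Hxp0 : xp n b (ts 0%N) = ts 0%N.
  apply: ffunPn => g; rewrite ffunE t0n mul0n addn0.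
  by case: (eqVneq g n) => [->|_].
have kR : (k%:R : R) != 0 by rewrite pnatr_eq0 -lt0n.
apply: (@adjacent_of_cost _ _ _ (Uw w n h1 b false) D _ _
          (fun t => (t n)%:R / k%:R)).
- exact: core_vertex.
- exact: core_vertex.
- by move=> /ffunP /(_ n); rewrite !ffunE t0n (iD I) => /eqP; rewrite eqr_nat; lia.
- by rewrite cost_Uw // Hxp0 Hopt Pen_false addr0.
- by rewrite cost_Uw // (inv_xp I) Hopt Pen_false addr0.
- move=> t Ht; rewrite cost_Uw // Pen_false addr0.
  exact: (Hval (xp_inT Hn (iB0 I) (iS I) Hw Ht)).
move=> t Ht; rewrite cost_Uw // Pen_false addr0 => Ex.
have Ht' := xp_inT Hn (iB0 I) (iS I) Hw Ht.
have X := Huniq Ht' Ex.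
have Htn : (t n <= k)%N.
  have := eqF X h1; rewrite ffunE -(iC I) (negbTE Hh1n).
  move: Hbh1; move: (b h1) (t n) (t h1) => x y z; nia.
split.
  apply/andP; split; first by apply: divr_ge0; apply: ler0n.
  by rewrite ler_pdivrMr ?mul1r ?ler_nat // ltr0n.
apply/ffunP => g; rewrite !ffunE.
have := eqF X g; rewrite ffunE; have := iA I g.
case: (eqVneq g n) => [->|Hgn].
  by rewrite t0n (iD I) => _ _; field.
move=> E2 E1.
have E2' : ((ts j g)%:R + k%:R * (b g)%:R = (ts 0%N g)%:R :> R).
  by rewrite -natrM -natrD E2 natrD addr0.
have -> : (t g)%:R = (ts 0%N g)%:R - (t n)%:R * (b g)%:R :> R.
  by rewrite -E1 natrD natrM addrK.
have -> : (ts j g)%:R = (ts 0%N g)%:R - k%:R * (b g)%:R :> R.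
  by rewrite -E2' addrK.
by field.
Qed.

End Chain.

Set Implicit Arguments. Unset Strict Implicit. Unset Printing Implicit Defensive.

Lemma weights (G : finZmodType) (g0 : G) (R : realFieldType) (t0 : {ffun G -> nat}) :
  is_vertex g0 (embed R t0) -> exists (w : G -> R) (D : R),
   [/\ (forall t, inT g0 t -> D <= ccost w t)%R,
       (forall t, inT g0 t -> ccost w t = D -> t = t0) & ccost w t0 = D].
Proof.
move=> [Hin [c [d [Hle Hiff]]]].
have Hc : forall t, ccost (fun g => - c g)%R t = (- dotp c (embed R t))%R.
  by move=> t; rewrite dotp_embed /ccost -sumrN; apply: eq_bigr => g _; rewrite mulNr.
exists (fun g => - c g)%R, (- d)%R; split.
- by move=> t Ht; rewrite Hc lerN2; apply: (Hle _ (inP_embed R Ht)).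
- move=> t Ht; rewrite Hc => /eqP; rewrite eqr_opp => /eqP E.
  have := (Hiff _ (inP_embed R Ht)).1 E => /ffunP H.
  apply/ffunP => g; have := H g; rewrite !ffunE => /eqP; rewrite eqr_nat => /eqP //.
- by rewrite Hc (Hiff _ Hin).2.
Qed.

Lemma core_all (G : finZmodType) (g0 : G) (R : realFieldType) (m : nat)
  (ts : nat -> {ffun G -> nat}) (nu : nat -> mu_op G) :
  (1 <= m)%N ->
  is_vertex g0 (embed R (ts 0%N)) ->
  (forall i, (1 <= i <= m)%N ->
     applicable g0 (ts i.-1) (nu i) /\ ts i = mu_apply (nu i) (ts i.-1)) ->
  (forall i, (1 <= i < m)%N ->
     leading (nu i.+1) = new_elem (nu i) (ts i.-1)) ->
  (forall j, (j <= m)%N -> is_vertex g0 (embed R (ts j))) /\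
  (forall j, (0 < j <= m)%N ->
     adjacent g0 (embed R (ts 0%N)) (embed R (ts j)) /\ ts 0%N <> ts j).
Proof.
move=> Hm Hv Happ Hlead.
have [w [D [Hval Huniq Hopt]]] := weights Hv.
split=> j Hj.
  exact: (core_vertex Hval Huniq Hopt Hm Happ Hlead Hj).
exact: (core_adj Hval Huniq Hopt Hm Happ Hlead Hj).
Qed.

Unset Implicit Arguments.

Theorem theorem6 (G : finZmodType) (g0 : G) (R : realFieldType) (m : nat)
  (ts : nat -> {ffun G -> nat}) (nu : nat -> mu_op G) :
  (1 <= m)%N ->
  is_vertex g0 (embed R (ts 0%N)) ->
  (forall i, (1 <= i <= m)%N ->
     applicable g0 (ts i.-1) (nu i) /\ ts i = mu_apply (nu i) (ts i.-1)) ->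
  (forall i, (1 <= i < m)%N ->
     leading (nu i.+1) = new_elem (nu i) (ts i.-1)) ->
  (forall i j, (i <= m)%N -> (j <= m)%N -> i <> j -> ts i <> ts j) /\
  (forall i, (i <= m)%N -> is_vertex g0 (embed R (ts i))) /\
  (forall i j, (i < j <= m)%N ->
     adjacent g0 (embed R (ts i)) (embed R (ts j))).
Proof.
move=> Hm Hv Happ Hlead.
have [Hvert _] := core_all Hm Hv Happ Hlead.
have Shift : forall i j, (i < j <= m)%N ->
    adjacent g0 (embed R (ts i)) (embed R (ts j)) /\ ts i <> ts j.
  move=> i j /andP [Hij Hjm].
  have Hm' : (1 <= m - i)%N by lia.
  have Hv' : is_vertex g0 (embed R ((fun k => ts (i + k)%N) 0%N)).
    by rewrite /= addn0; apply: Hvert; lia.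
  have Happ' : forall k, (1 <= k <= m - i)%N ->
     applicable g0 ((fun k => ts (i + k)%N) k.-1) ((fun k => nu (i + k)%N) k) /\
     (fun k => ts (i + k)%N) k =
       mu_apply ((fun k => nu (i + k)%N) k) ((fun k => ts (i + k)%N) k.-1).
    move=> k Hk /=.
    have -> : (i + k.-1 = (i + k).-1)%N by lia.
    by apply: Happ; lia.
  have Hlead' : forall k, (1 <= k < m - i)%N ->
     leading ((fun k => nu (i + k)%N) k.+1) =
       new_elem ((fun k => nu (i + k)%N) k) ((fun k => ts (i + k)%N) k.-1).
    move=> k Hk /=.
    have -> : (i + k.-1 = (i + k).-1)%N by lia.
    rewrite addnS; apply: Hlead; lia.
  have [_ Hadj] := core_all Hm' Hv' Happ' Hlead'.
  have := Hadj (j - i)%N; rewrite /= addn0 subnKC; last by lia.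
  by apply; lia.
split; last split=> //.
- move=> i j Hi Hj Hij.
  case: (ltngtP i j) => H; last by [].
  + by have [] := Shift i j; first by rewrite H Hj.
  + have [_ Hne] : adjacent g0 (embed R (ts j)) (embed R (ts i)) /\ ts j <> ts i.
      by apply: Shift; rewrite H Hi.
    by move=> E; apply: Hne; rewrite E.
- by move=> i j H; have [] := Shift i j H.
Qed.
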